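(* The network simplex algorithm applied to the transformed problem, starting from a feasible basis structure and performing simplex pivots until no entering edge exists, performs $\mathcal{O}(nm\,\mathcal{U}\mathcal{B}\log(m\mathcal{C}\mathcal{U}\mathcal{B}))$ non-degenerate simplex pivots in total when the entering edge is always chosen by Dantzig's pivoting rule. Here $n=|V|$, $m=|E|$, $\mathcal{C}=\max_e|c_e|$, $\mathcal{U}=\max_eu_e$, $\mathcal{B}=\max_eb_e$.
   Context: Problem: directed multigraph $G=(V,E)$, capacities $u_e\in\mathbb{N}_{\ge0}$, costs $c_e\in\mathbb{Z}$, usage fees $b_e\in\mathbb{N}_{\ge0}$, budget $B\in\mathbb{N}_{\ge0}$; a feasible flow is $x\in\mathbb{R}^E$ with flow conservation at every node and $0\le x\le u$; minimize $c(x)=\sum_ec_ex_e$ subject to $b(x)=\sum_eb_ex_e\le B$. The transformed problem uses budget $B'=B+\tfrac12$. Standing assumptions: $G$ strongly connected; some flow minimizing $c$ over all feasible flows has $b(x)\ge B+1$. Basis structure: tuple $(L,T,U,\bar e)$, $\bar e\in E$, $L,T,U$ a partition of $E\setminus\{\bar e\}$, $T$ a spanning tree of the underlying undirected graph. For $f\notin T$, $C(f)$ is the unique cycle in $T\cup\{f\}$ oriented along $f$, forward edges $C^+(f)$, backward edges $C^-(f)$; $\chi(C)$ is $+1$ on $C^+$, $-1$ on $C^-$, $0$ elsewhere. Required: $\sum_{C^+(\bar e)}b-\sum_{C^-(\bar e)}b\neq0$. Basic solution: unique $x$ with flow conservation, $x=0$ on $L$, $x=u$ on $U$, $b(x)=B'$;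 feasible if $0\le x\le u$. Node potentials: for a fixed root $v_r$, $\pi,\mu$ unique with $\pi_{v_r}=\mu_{v_r}=0$ and $c^\pi_g:=c_g-\pi_v+\pi_w=0$, $b^\mu_g:=b_g-\mu_v+\mu_w=0$ for $g=(v,w)\in T$ (same formulas on all edges). Reduced costs $d_g:=c^\pi_g-c^\pi_{\bar e}\,b^\mu_g/b^\mu_{\bar e}$. Entering edge: $e\in L$ with $d_e<0$ or $e\in U$ with $d_e>0$. Dantzig's pivoting rule: choose an entering edge maximizing $|d_e|$ among all entering edges. Simplex pivot with entering edge $e$: $\sigma=1$ if $e\in L$, $\sigma=-1$ if $e\in U$; $\theta=\sigma(\chi(C(e))-\frac{b^\mu_e}{b^\mu_{\bar e}}\chi(C(\bar e)))$; $\delta_f=-x_f/\theta_f$ if $\theta_f<0$, $(u_f-x_f)/\theta_f$ if $\theta_f>0$, $+\infty$ otherwise; $\delta=\min_f\delta_f$, $x'=x+\delta\theta$; leaving edge: any $e'$ with $\delta_{e'}=\delta$. New tuple: if $e'=e$, move $e$ between $L$ and $U$; if $e'=\bar e$, $T'=T$, $\bar e'=e$, $e$ removed from $L$ or $U$, $\bar e$ put into $L'$ if $x'_{\bar e}=0$ else into $U'$; otherwise $e$ removed from $L$ or $U$, $e'$ put into $L'$ if $x'_{e'}=0$ else $U'$, and $T'=T\cup\{e\}\setminus\{e'\}$, $\bar e'=\bar e$ if this is a spanning tree, else $T'=T\cup\{\bar e\}\setminus\{e'\}$, $\bar e'=e$. The pivot is non-degenerate if $\delta>0$. *)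

(* Defs.v *)
From HB Require Import structures.
From mathcomp Require Import all_boot all_order all_algebra.
Set Implicit Arguments. Unset Strict Implicit. Unset Printing Implicit Defensive.
Import Order.TTheory GRing.Theory Num.Theory.

Record net (V E : finType) := Net {
  src : E -> V; tgt : E -> V;
  cap : E -> nat;
  cst : E -> int;
  fee : E -> nat;
  bud : nat
}.

Record bstruct (E : finType) := BS {
  bsL : {set E}; bsT : {set E}; bsU : {set E}; bsbar : E }.

Section Defs.
Variables (V E : finType) (N : net V E).

Definition n_of := #|V|.
Definition m_of := #|E|.
Definition Cmax := (\max_(e : E) absz (cst N e))%N.
Definition Umax := (\max_(e : E) cap N e)%N.
Definition Bmax := (\max_(e : E) fee N e)%N.

Definition arc_rel : rel V := [rel v w | [exists e, (src N e == v) && (tgt N e == w)]].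
Definition strongly_connected := forall v w : V, connect arc_rel v w.

Definition urel (T : {set E}) : rel V :=
  [rel v w | [exists e in T, ((src N e == v) && (tgt N e == w))
                         || ((src N e == w) && (tgt N e == v))]].

Definition spanning_tree (T : {set E}) : bool :=
  [forall v, forall w, connect (urel T) v w] && (#|T| == #|V|.-1)%N.

Local Open Scope ring_scope.
Variable R : realFieldType.

Definition conservation (x : E -> R) :=
  forall v : V, \sum_(g | tgt N g == v) x g = \sum_(g | src N g == v) x g.

Definition feasible_flow (x : E -> R) :=
  conservation x /\ forall e, 0 <= x e <= (cap N e)%:R.

Definition cost (x : E -> R) : R := \sum_e (cst N e)%:~R * x e.
Definition usage (x : E -> R) : R := \sum_e (fee N e)%:R * x e.

(* chi(C(f)) for f not in T: the incidence vector of the unique cycle in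
   T + f oriented along f, characterized as the unique circulation supported
   on T + f taking value 1 on f. *)
Definition is_cycvec (T : {set E}) (f : E) (z : E -> R) :=
  [/\ conservation z, z f = 1 & forall g, g \notin T -> g != f -> z g = 0].

Definition is_basis (S : bstruct E) :=
  let: BS L T U eb := S in
  [/\ eb \notin L :|: T :|: U,
      [&& [disjoint L & T], [disjoint L & U] & [disjoint T & U]],
      L :|: T :|: U = [set: E] :\ eb,
      spanning_tree T &
      exists z, is_cycvec T eb z /\ \sum_e z e * (fee N e)%:R != 0].

(* basic solution w.r.t. the transformed budget B' = B + 1/2 *)
Definition basic_sol (S : bstruct E) (x : E -> R) :=
  [/\ conservation x,
      forall f, f \in bsL S -> x f = 0,
      forall f, f \in bsU S -> x f = (cap N f)%:R &
      usage x = (bud N)%:R + 2%:R^-1].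

Definition feasible_basis (S : bstruct E) :=
  is_basis S /\ exists x, basic_sol S x /\ forall e, 0 <= x e <= (cap N e)%:R.

Definition cpi (pi : V -> R) (g : E) : R := (cst N g)%:~R - pi (src N g) + pi (tgt N g).
Definition bmu (mu : V -> R) (g : E) : R := (fee N g)%:R - mu (src N g) + mu (tgt N g).

Definition potentials (vr : V) (S : bstruct E) (pi mu : V -> R) :=
  [/\ pi vr = 0, mu vr = 0 &
      forall g, g \in bsT S -> cpi pi g = 0 /\ bmu mu g = 0].

Definition redcost (S : bstruct E) (pi mu : V -> R) (g : E) : R :=
  cpi pi g - cpi pi (bsbar S) * bmu mu g / bmu mu (bsbar S).

Definition entering (S : bstruct E) (pi mu : V -> R) (e : E) :=
  (e \in bsL S /\ redcost S pi mu e < 0) \/ (e \in bsU S /\ redcost S pi mu e > 0).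

(* delta_f (only used when theta_f <> 0) *)
Definition delta_f (x theta : E -> R) (f : E) : R :=
  if theta f < 0 then - x f / theta f else ((cap N f)%:R - x f) / theta f.

Definition new_tuple (S : bstruct E) (e e' : E) (x' : E -> R) (S' : bstruct E) :=
  let: BS L T U eb := S in
  if e' == e then
    (if e \in L then S' = BS (L :\ e) T (e |: U) eb
     else S' = BS (e |: L) T (U :\ e) eb)
  else if e' == eb then
    S' = BS (if x' eb == 0 then eb |: (L :\ e) else L :\ e) T
            (if x' eb == 0 then U :\ e else eb |: (U :\ e)) e
  else
    let L' := if x' e' == 0 then e' |: (L :\ e) else L :\ e in
    let U' := if x' e' == 0 then U :\ e else e' |: (U :\ e) in
    (spanning_tree ((e |: T) :\ e') /\ S' = BS L' ((e |: T) :\ e') U' eb)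
    \/ (~~ spanning_tree ((e |: T) :\ e') /\ S' = BS L' ((eb |: T) :\ e') U' e).

Definition dantzig_pivot (vr : V) (S S' : bstruct E) (nd : bool) :=
  is_basis S /\
  exists (pi mu : V -> R) (x ze zb : E -> R) (e e' : E),
  [/\ [/\ potentials vr S pi mu, basic_sol S x,
      is_cycvec (bsT S) e ze & is_cycvec (bsT S) (bsbar S) zb],
      entering S pi mu e,
      (forall f, entering S pi mu f ->
         `|redcost S pi mu f| <= `|redcost S pi mu e|) &
      let sigma : R := if e \in bsL S then 1 else -1 in
      let theta f := sigma * (ze f - bmu mu e / bmu mu (bsbar S) * zb f) in
      [/\ theta e' != 0,
          (forall f, theta f != 0 -> delta_f x theta e' <= delta_f x theta f),
          new_tuple S e e' (fun f => x f + delta_f x theta e' * theta f) S' &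
          nd = (0 < delta_f x theta e')]].

Definition terminal (vr : V) (S : bstruct E) :=
  is_basis S /\ exists pi mu : V -> R,
    potentials vr S pi mu /\ forall e, ~ entering S pi mu e.

Definition dantzig_run (vr : V) (k : nat) (Ss : nat -> bstruct E) (nd : nat -> bool) :=
  [/\ feasible_basis (Ss 0%N),
      forall i, (i < k)%N -> dantzig_pivot vr (Ss i) (Ss i.+1) (nd i) &
      terminal vr (Ss k)].

End Defs.

(* Main.v *)
Require Import Defs.
From mathcomp Require Import all_boot all_order all_algebra.
From mathcomp Require Import ring lra zify.
Import Order.TTheory GRing.Theory Num.Theory.
Set Implicit Arguments. Unset Strict Implicit. Unset Printing Implicit Defensive.

Section Graph.
Variables (V E : finType) (N : net V E).

Lemma urel_sym (T : {set E}) : symmetric (urel N T).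
Proof.
move=> u w /=; apply/existsP/existsP => -[h /andP[hT hh]]; exists h;
  by rewrite hT /= orbC.
Qed.

Section Count.
Variables (F : {set E}) (r : V).
Hypothesis conn : forall v, connect (urel N F) r v.

Fixpoint reach (k : nat) : {set V} :=
  if k is k'.+1 then reach k' :|: [set v | [exists u in reach k', urel N F u v]]
  else [set r].

Lemma reach_step k u v : u \in reach k -> urel N F u v -> v \in reach k.+1.
Proof.
move=> uk uv /=; rewrite in_setU; apply/orP; right; rewrite inE.
by apply/existsP; exists u; rewrite uk.
Qed.

Lemma path_reach p : forall u k, path (urel N F) u p -> u \in reach k ->
  last u p \in reach (k + size p).
Proof.
elim: p => [|w p IH] u k /=; first by rewrite addn0.
move=> /andP[uw pw] uk; rewrite addnS -addSn; apply: IH => //.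
exact: reach_step uk uw.
Qed.

Lemma ex_reach v : exists k, v \in reach k.
Proof.
have /connectP[p pp ->] := conn v; exists (0 + size p).
apply: path_reach => //; by rewrite /= inE.
Qed.

Definition dist v := ex_minn (ex_reach v).

Lemma dist_in v : v \in reach (dist v).
Proof. by rewrite /dist; case: ex_minnP. Qed.

Lemma dist_min v k : v \in reach k -> (dist v <= k)%N.
Proof. by rewrite /dist; case: ex_minnP => m _ H /H. Qed.

Lemma dist_pred v : v != r -> exists u, urel N F u v && (dist u < dist v)%N.
Proof.
move=> vr; have := dist_in v; case Ed: (dist v) => [|k] /=.
  by rewrite inE (negbTE vr).
rewrite in_setU => /orP[vk|].
  by have := dist_min vk; rewrite Ed ltnn.
rewrite inE => /existsP[u /andP[uk uv]]; exists u; rewrite uv /=.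
by rewrite ltnS dist_min.
Qed.

Definition phi v := [pick h in F | ((tgt N h == v) && (dist (src N h) < dist v)%N)
                                 || ((src N h == v) && (dist (tgt N h) < dist v)%N)].

Lemma phi_some v : v != r -> exists2 h, h \in F & phi v = Some h /\
   (((tgt N h == v) && (dist (src N h) < dist v)%N)
      || ((src N h == v) && (dist (tgt N h) < dist v)%N)).
Proof.
move=> vr; rewrite /phi; case: pickP => [h /andP[hF hh]|none].
  by exists h.
exfalso; have [u /andP[/existsP[h /andP[hF hh]] du]] := dist_pred vr.
have := none h; rewrite hF /=.
by case/orP: hh => /andP[/eqP su /eqP tv]; rewrite su tv eqxx du ?orbT.
Qed.

Lemma conn_count : (#|V| <= #|F| + 1)%N.
Proof.
have inj : {in [set~ r] &, injective phi}.
  move=> v1 v2; rewrite !inE => v1r v2r e12.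
  have [h1 _ [p1 c1]] := phi_some v1r; have [h2 _ [p2 c2]] := phi_some v2r.
  move: e12; rewrite p1 p2 => -[eh]; subst h2.
  case/orP: c1 => /andP[/eqP a1 b1]; case/orP: c2 => /andP[/eqP a2 b2];
    try by rewrite -a1 -a2.
  - by move: b1 b2; rewrite -a1 -a2 => b1 b2; have := ltn_trans b1 b2; rewrite ltnn.
  - by move: b1 b2; rewrite -a1 -a2 => b1 b2; have := ltn_trans b1 b2; rewrite ltnn.
have sub : phi @: [set~ r] \subset [set Some h | h in F].
  apply/subsetP => o /imsetP[v]; rewrite !inE => vr ->.
  have [h hF [-> _]] := phi_some vr; exact: imset_f.
have := subset_leq_card sub; rewrite card_in_imset // card_imset; last exact: Some_inj.
rewrite cardsC1 => H; rewrite -(leq_add2r 1) in H.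
by apply: leq_trans H; rewrite addn1; exact: leqSpred.
Qed.
End Count.

Lemma tree_cut (T : {set E}) g : spanning_tree N T -> g \in T ->
  exists S : {set V}, forall h, h \in T ->
    ((src N h \in S) != (tgt N h \in S)) = (h == g).
Proof.
move=> /andP[/forallP conT /eqP cT] gT.
set F := T :\ g.
have symF := urel_sym F.
exists [set v | connect (urel N F) (src N g) v] => h hT; rewrite !inE.
case: (eqVneq h g) => [->|hg].
  rewrite connect0 /=; apply/negP => tg.
  have conF : forall v, connect (urel N F) (src N g) v.
    move=> v; have := forallP (conT (src N g)) v.
    apply: connect_sub => u w /existsP[h' /andP[h'T hh']].
    case: (eqVneq h' g) => [E1|ne].
      subst h'; case/orP: hh' => /andP[/eqP <- /eqP <-] //.
      by rewrite (sym_connect_sym symF).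
    apply: connect1; apply/existsP; exists h'; by rewrite !inE ne h'T.
  have := conn_count conF; rewrite /F.
  have := cardsD1 g T; rewrite gT cT.
  have : (0 < #|V|)%N by apply/card_gt0P; exists (src N g).
  case: #|V| => [|nv] // _ /= ->; rewrite add1n addn1 ltnn //.
have hF : urel N F (src N h) (tgt N h).
  by apply/existsP; exists h; rewrite !inE hg hT !eqxx.
suff -> : connect (urel N F) (src N g) (tgt N h) = connect (urel N F) (src N g) (src N h).
  by rewrite eqxx.
apply/idP/idP => [c|c]; last first.
  exact: connect_trans c (connect1 hF).
apply: connect_trans c _; rewrite (sym_connect_sym symF); exact: connect1.
Qed.

End Graph.

Local Open Scope ring_scope.

Section Flow.
Variables (R : realFieldType) (V E : finType) (N : net V E).

Definition isZ (x : R) := exists z : int, x = z%:~R.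
Definition isU (x : R) := exists2 z : int, `|z| <= 1 & x = z%:~R.

Lemma isZ_nat (k : nat) : isZ k%:R. Proof. by exists k%:Z; rewrite pmulrn. Qed.
Lemma isZ_int (k : int) : isZ k%:~R. Proof. by exists k. Qed.
Lemma isZ0 : isZ 0. Proof. by exists 0. Qed.
Lemma isZD x y : isZ x -> isZ y -> isZ (x + y).
Proof. by move=> [a ->] [b ->]; exists (a + b); rewrite intrD. Qed.
Lemma isZN x : isZ x -> isZ (- x).
Proof. by move=> [a ->]; exists (- a); rewrite intrN. Qed.
Lemma isZB x y : isZ x -> isZ y -> isZ (x - y).
Proof. by move=> ? ?; apply: isZD => //; apply: isZN. Qed.
Lemma isZM x y : isZ x -> isZ y -> isZ (x * y).
Proof. by move=> [a ->] [b ->]; exists (a * b); rewrite intrM. Qed.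
Lemma isZ_sum (I : finType) (P : pred I) (F : I -> R) :
  (forall i, P i -> isZ (F i)) -> isZ (\sum_(i | P i) F i).
Proof.
move=> H; apply: (big_ind isZ) => //; [exact: isZ0 | exact: isZD].
Qed.
Lemma isZ_ge1 x : isZ x -> x != 0 -> 1 <= `|x|.
Proof.
move=> [a ->]; rewrite intr_eq0 -intr_norm => a0.
by rewrite ler1z; case: a a0 => [[|n]|n].
Qed.
Lemma isU_Z x : isU x -> isZ x. Proof. by move=> [a _ ->]; exists a. Qed.
Lemma isU_le1 x : isU x -> `|x| <= 1.
Proof. by move=> [a a1 ->]; rewrite -intr_norm -[1]/(1%:~R) ler_int. Qed.
Lemma isUM x y : isU x -> isU y -> isU (x * y).
Proof.
move=> [a a1 ->] [b b1 ->]; exists (a * b); last by rewrite intrM.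
by rewrite normrM; rewrite -[1]mulr1; apply: ler_pM.
Qed.
Lemma isUN x : isU x -> isU (- x).
Proof. by move=> [a a1 ->]; exists (- a); rewrite ?normrN ?intrN. Qed.
Lemma isU0 : isU 0. Proof. by exists 0. Qed.
Lemma isU1 : isU 1. Proof. by exists 1. Qed.

Lemma pot_cancel (z : E -> R) (phi : V -> R) : conservation N z ->
  \sum_g z g * (phi (tgt N g) - phi (src N g)) = 0.
Proof.
move=> cz.
have H (p : E -> V) : \sum_g z g * phi (p g) = \sum_v phi v * \sum_(g | p g == v) z g.
  rewrite (partition_big p predT) //=; apply: eq_bigr => v _.
  rewrite mulr_sumr; apply: eq_bigr => g /eqP ->; exact: mulrC.
under eq_bigr do rewrite mulrBr.
rewrite sumrB H H; apply/eqP; rewrite subr_eq0; apply/eqP.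
by apply: eq_bigr => v _; rewrite cz.
Qed.

Definition kap (S : {set V}) (h : E) : R :=
  ((tgt N h \in S)%:R - (src N h \in S)%:R).

Lemma kap_int S h : kap S h = ((tgt N h \in S)%:Z - (src N h \in S)%:Z)%:~R.
Proof. by rewrite /kap intrB !pmulrn. Qed.

Lemma kapU S h : isU (kap S h).
Proof.
rewrite kap_int; eexists => //.
by case: (tgt N h \in S); case: (src N h \in S).
Qed.

Lemma cut_cons S z : conservation N z -> \sum_h z h * kap S h = 0.
Proof. by move=> cz; apply: (pot_cancel (fun v => (v \in S)%:R) cz). Qed.

Lemma tree_formula (T : {set E}) (S : {set V}) g (z : E -> R) :
  (forall h, h \in T -> ((src N h \in S) != (tgt N h \in S)) = (h == g)) ->
  g \in T -> conservation N z ->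
  z g = - kap S g * \sum_(h | h \notin T) z h * kap S h.
Proof.
move=> cut gT cz.
have := cut_cons S cz; rewrite (bigID (fun h => h \in T)) /= (bigD1 g) //=.
rewrite big1 ?addr0; last first.
  move=> h /andP[hT hg]; have := cut h hT; rewrite (negbTE hg) /kap.
  by case: (src N h \in S); case: (tgt N h \in S) => // _; rewrite subrr mulr0.
have kg : kap S g * kap S g = 1.
  have := cut g gT; rewrite eqxx /kap.
  by case: (src N g \in S); case: (tgt N g \in S) => // _;
     rewrite ?subr0 ?sub0r ?mulr1 ?mulrNN ?mulr1.
move/eqP; rewrite addr_eq0 => /eqP H.
by rewrite mulNr -mulrN -H mulrCA kg mulr1.
Qed.

Lemma tree_zero (T : {set E}) (z : E -> R) : spanning_tree N T -> conservation N z ->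
  (forall h, h \notin T -> z h = 0) -> forall g, z g = 0.
Proof.
move=> sT cz z0 g; case: (boolP (g \in T)) => gT; last exact: z0.
have [S cut] := tree_cut sT gT.
rewrite (tree_formula cut gT cz) big1 ?mulr0 //.
by move=> h hT; rewrite z0 // mul0r.
Qed.

Lemma tree_int (T : {set E}) (z : E -> R) : spanning_tree N T -> conservation N z ->
  (forall h, h \notin T -> isZ (z h)) -> forall g, isZ (z g).
Proof.
move=> sT cz zi g; case: (boolP (g \in T)) => gT; last exact: zi.
have [S cut] := tree_cut sT gT.
rewrite (tree_formula cut gT cz); apply: isZM; first exact/isZN/isU_Z/kapU.
apply: isZ_sum => h hT; apply: isZM; [exact: zi | exact/isU_Z/kapU].
Qed.

Lemma cyc_U (T : {set E}) f (z : E -> R) : spanning_tree N T -> f \notin T ->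
  is_cycvec N T f z -> forall g, isU (z g).
Proof.
move=> sT fT [cz zf z0] g; case: (boolP (g \in T)) => gT; last first.
  case: (eqVneq g f) => [->|gf]; [rewrite zf; exact: isU1 | rewrite z0 //; exact: isU0].
have [S cut] := tree_cut sT gT.
rewrite (tree_formula cut gT cz) (bigD1 f) //= big1 ?addr0; last first.
  by move=> h /andP[hT hf]; rewrite z0 // mul0r.
rewrite zf mul1r; apply: isUM; [exact/isUN/kapU | exact: kapU].
Qed.

Lemma sum_bound (A : {set E}) (z w : E -> R) (W : R) :
  (forall g, g \notin A -> z g = 0) -> (forall g, `|z g| <= 1) ->
  (forall g, `|w g| <= W) -> `|\sum_g z g * w g| <= #|A|%:R * W.
Proof.
move=> z0 z1 wW.
rewrite (bigID (fun g => g \in A)) /= [X in _ + X]big1 ?addr0; last first.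
  by move=> g gA; rewrite z0 // mul0r.
apply: le_trans (ler_norm_sum _ _ _) _.
rewrite -sum1_card natr_sum mulr_suml; apply: ler_sum => g _.
rewrite mul1r normrM -[W]mul1r; apply: ler_pM => //.
Qed.

End Flow.


Section Basis.
Variables (R : realFieldType) (V E : finType) (N : net V E).

Lemma cons_comb (a b : E -> R) (al be : R) : conservation N a -> conservation N b ->
  conservation N (fun g => al * a g + be * b g).
Proof.
move=> ca cb v; rewrite !big_split /= -!mulr_sumr; by rewrite ca cb.
Qed.

Lemma part L T U eb h : is_basis N R (BS L T U eb) ->
  [\/ h = eb /\ [&& h \notin L, h \notin T & h \notin U],
      h \in L /\ [&& h != eb, h \notin T & h \notin U],
      h \in T /\ [&& h != eb, h \notin L & h \notin U] |
      h \in U /\ [&& h != eb, h \notin L & h \notin T]].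
Proof.
move=> [ebn /and3P[dLT dLU dTU] eq _ _].
case: (eqVneq h eb) => [->|hne].
  by apply: Or41; split => //; move: ebn; rewrite !inE !negb_or => /andP[/andP[-> ->] ->].
have : h \in L :|: T :|: U by rewrite eq !inE hne.
rewrite !inE => /orP[/orP[hL|hT]|hU].
- by apply: Or42; rewrite hL (disjointFr dLT hL) (disjointFr dLU hL).
- by apply: Or43; rewrite hT (disjointFl dLT hT) (disjointFr dTU hT).
- by apply: Or44; rewrite hU (disjointFl dLU hU) (disjointFl dTU hU).
Qed.

Definition usage' (x : E -> R) := usage N x.

Lemma usage_comb (a b : E -> R) (al be : R) :
  usage N (fun g => al * a g + be * b g) = al * usage N a + be * usage N b.
Proof.
rewrite /usage !mulr_sumr -big_split /=; apply: eq_bigr => g _;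
  by rewrite mulrDr; congr (_ + _); rewrite mulrCA.
Qed.

Lemma usage_cyc (z : E -> R) : usage N z = \sum_g z g * (fee N g)%:R.
Proof. by apply: eq_bigr => g _; rewrite mulrC. Qed.

Lemma basic_unique L T U eb (x y : E -> R) : is_basis N R (BS L T U eb) ->
  basic_sol N (BS L T U eb) x -> basic_sol N (BS L T U eb) y -> x =1 y.
Proof.
move=> hB; have hB' := hB; case: hB' => [_ _ _ sT [zb [[czb zb1 zb0] D0]]].
move=> [cx xL xU ux] [cy yL yU uy].
set t := x eb - y eb.
have cxy : conservation N (fun g => 1 * x g + (-1) * y g) by apply: cons_comb.
have cw : conservation N (fun g => 1 * (1 * x g + (-1) * y g) + (- t) * zb g).
  exact: cons_comb.
have wz : forall h, h \notin T -> 1 * (1 * x h + (-1) * y h) + (- t) * zb h = 0.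
  move=> h hT; rewrite !mul1r mulN1r mulNr.
  have [[-> _]|[hL /and3P[hne _ _]]|[hT' _]|[hU /and3P[hne _ _]]] := part h hB.
  - by rewrite zb1 mulr1 /t subrr.
  - by rewrite xL // yL // zb0 // mulr0 !subr0.
  - by rewrite hT' in hT.
  - by rewrite xU // yU // zb0 // mulr0 subr0 subrr.
have w0 := tree_zero sT cw wz.
have key : forall g, x g = y g + t * zb g.
  move=> g; have := w0 g; rewrite !mul1r mulN1r mulNr => /eqP.
  rewrite subr_eq0 subr_eq => /eqP ->; by rewrite addrC.
have : usage N x = usage N (fun g => 1 * y g + t * zb g).
  by apply: eq_bigr => g _; rewrite key mul1r.
rewrite usage_comb mul1r ux uy usage_cyc => /eqP; rewrite eq_sym -subr_eq0 addrAC subrr add0r.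
rewrite mulf_eq0 (negbTE D0) orbF => /eqP t0 g.
by rewrite key t0 mul0r addr0.
Qed.

Lemma basic_gran L T U eb (x zb : E -> R) : is_basis N R (BS L T U eb) ->
  is_cycvec N T eb zb -> basic_sol N (BS L T U eb) x ->
  forall g, isZ (2%:R * (\sum_h zb h * (fee N h)%:R) * x g).
Proof.
move=> hB; have hB' := hB; case: hB' => [ebn _ _ sT _].
have ebT : eb \notin T by move: ebn; rewrite !inE !negb_or => /andP[/andP[_ ->] _].
move=> zc; have zU := cyc_U sT ebT zc; case: zc => [czb zb1 zb0].
move=> [cx xL xU ux].
set D := \sum_h _.
have cq : conservation N (fun g => 1 * x g + (- x eb) * zb g) by apply: cons_comb.
have qZ := tree_int sT cq.
have qZ' : forall g, isZ (1 * x g + - x eb * zb g).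
  apply: qZ => h hT.
  have [[-> _]|[hL /and3P[hne _ _]]|[hT' _]|[hU /and3P[hne _ _]]] := part h hB.
  - by rewrite zb1 mulr1 mul1r subrr; exact: isZ0.
  - by rewrite xL // zb0 // !mulr0 addr0; exact: isZ0.
  - by rewrite hT' in hT.
  - by rewrite xU // zb0 // mulr0 ?mul1r addr0; exact: isZ_nat.
have xD : isZ (2%:R * x eb * D).
  have : usage N x = usage N (fun g => 1 * (1 * x g + - x eb * zb g) + x eb * zb g).
    by apply: eq_bigr => g _; rewrite !mul1r mulNr addrNK.
  rewrite usage_comb mul1r ux (usage_cyc zb) -/D => uq.
  have -> : 2%:R * x eb * D = 2%:R * (bud N)%:R + 1 - 2%:R * usage N (fun g => 1 * x g + - x eb * zb g).
    rewrite -mulrA.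
    have -> : x eb * D = ((bud N)%:R + 2%:R^-1) - usage N (fun g => 1 * x g + - x eb * zb g).
      by rewrite uq addrAC subrr add0r.
    by rewrite mulrBr mulrDr mulfV ?pnatr_eq0.
  apply: isZB; first by apply: isZD; [apply: isZM; apply: isZ_nat|by exists 1].
  apply: isZM; first exact: isZ_nat.
  rewrite /usage; apply: isZ_sum => g _; apply: isZM; [exact: isZ_nat | exact: qZ'].
move=> g.
have -> : 2%:R * D * x g = 2%:R * D * (1 * x g + - x eb * zb g) + (2%:R * x eb * D) * zb g.
  by ring.
apply: isZD; first by apply: isZM => //; apply: isZM; [exact: isZ_nat|];
  apply: isZ_sum => h _; apply: isZM; [exact: isU_Z|exact: isZ_nat].
apply: isZM => //; exact: isU_Z.
Qed.

End Basis.


Section Step.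
Variables (R : realFieldType) (V E : finType) (N : net V E).

Lemma sum_cpi (pi : V -> R) (w : E -> R) : conservation N w ->
  \sum_g w g * cpi N pi g = \sum_g w g * (cst N g)%:~R.
Proof.
move=> cw; rewrite /cpi.
under eq_bigr do rewrite -addrA mulrDr [- _ + _]addrC.
by rewrite big_split /= pot_cancel // addr0.
Qed.

Lemma sum_bmu (mu : V -> R) (w : E -> R) : conservation N w ->
  \sum_g w g * bmu N mu g = \sum_g w g * (fee N g)%:R.
Proof.
move=> cw; rewrite /bmu.
under eq_bigr do rewrite -addrA mulrDr [- _ + _]addrC.
by rewrite big_split /= pot_cancel // addr0.
Qed.

Lemma cyc_val (T : {set E}) f (z : E -> R) (F : E -> R) : is_cycvec N T f z ->
  (forall g, g \in T -> F g = 0) -> \sum_g z g * F g = F f.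
Proof.
move=> [_ zf z0] F0; rewrite (bigD1 f) //= zf mul1r big1 ?addr0 // => g gf.
case: (boolP (g \in T)) => gT; first by rewrite F0 // mulr0.
by rewrite z0 // mul0r.
Qed.

Lemma cost_lin (x t : E -> R) (a : R) :
  cost N (fun f => x f + a * t f) = cost N x + a * \sum_g t g * (cst N g)%:~R.
Proof.
rewrite /cost mulr_sumr -big_split /=; apply: eq_bigr => g _; ring.
Qed.

End Step.


Section Step2.
Variables (R : realFieldType) (V E : finType) (N : net V E) (vr : V).

Lemma cons_ext (a b : E -> R) : (forall g, a g = b g) -> conservation N a -> conservation N b.
Proof. move=> ab ca v; rewrite -!(eq_bigr _ (fun g _ => ab g)); exact: ca. Qed.

Lemma usage_ext (a b : E -> R) : (forall g, a g = b g) -> usage N a = usage N b.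
Proof. by move=> ab; apply: eq_bigr => g _; rewrite ab. Qed.

Lemma neg_div (a b : R) : 0 <= a -> b < 0 -> 0 <= - a / b.
Proof.
move=> a0 b0; rewrite mulNr -mulrN -invrN; apply: divr_ge0 => //.
by rewrite oppr_ge0 ltW.
Qed.

Lemma step L T U eb S' nd (x0 : E -> R) :
  dantzig_pivot N R vr (BS L T U eb) S' nd -> is_basis N R S' ->
  basic_sol N (BS L T U eb) x0 -> (forall f, 0 <= x0 f <= (cap N f)%:R) ->
  exists x' : E -> R, exists Del : R,
   [/\ basic_sol N S' x', (forall f, 0 <= x' f <= (cap N f)%:R),
       cost N x' = cost N x0 - Del, 0 <= Del &
       (nd -> [/\ (forall y : E -> R, feasible_flow N y -> usage N y = (bud N)%:R + 2%:R^-1 ->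
                     cost N x0 - cost N y <= (4 * #|V| * #|E| * Umax N * Bmax N)%:R * Del),
                 1 <= (4 * #|V| ^ 2 * Bmax N ^ 2)%:R * Del & (2 <= #|E|)%N])
       /\ (~~ nd -> Del = 0)].
Proof.
move=> [hB [pi [mu [x [ze [zb [e [e' [[pot bx zec zbc] ent dmax]]]]]]]]] /=.
move=> [th0 thmin nt ndE] hB' bx0 fx0.
set sg := (if e \in L then 1 else -1) in th0 thmin nt ndE.
set r := bmu N mu e / bmu N mu eb in th0 thmin nt ndE.
set th := (fun f => sg * (ze f - r * zb f)) in thmin nt ndE.
have th0' : th e' != 0 by [].
clear th0.
set dl := delta_f N x th e' in nt ndE.
have xx0 : x =1 x0 := basic_unique hB bx bx0.
have fx : forall f, 0 <= x f <= (cap N f)%:R by move=> f; rewrite xx0.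
have hB0 := hB; case: hB0 => [ebn /and3P[dLT dLU dTU] peq sT [z0 [z0c z0D]]].
have [ebL ebT ebU] : [/\ eb \notin L, eb \notin T & eb \notin U].
  by move: ebn; rewrite !inE !negb_or => /andP[/andP[-> ->] ->].
move: pot => [pivr muvr potT].
set d := redcost N (BS L T U eb) pi mu in ent dmax.
have [eT ebe eLU] : [/\ e \notin T, e != eb & (e \in L) || (e \in U)].
  case: ent => -[eI _].
    by rewrite eI (disjointFr dLT eI); split => //; apply: contraTneq eI => ->.
  by rewrite eI orbT (disjointFl dTU eI); split => //; apply: contraTneq eI => ->.
have [cze ze1 ze0] := zec; have [czb zb1 zb0] := zbc.
have Dfee : forall z f, is_cycvec N T f z -> \sum_g z g * (fee N g)%:R = bmu N mu f.
  move=> z f zc; rewrite -(sum_bmu mu); last by case: zc.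
  by apply: (cyc_val (F := bmu N mu) zc) => g gT; exact: (potT g gT).2.
have Dcst : forall z f, is_cycvec N T f z -> \sum_g z g * (cst N g)%:~R = cpi N pi f.
  move=> z f zc; rewrite -(sum_cpi pi); last by case: zc.
  by apply: (cyc_val (F := cpi N pi) zc) => g gT; exact: (potT g gT).1.
have D0 : bmu N mu eb != 0 by rewrite -(Dfee _ _ z0c).
have dT : forall g, g \in T -> d g = 0.
  by move=> g gT; rewrite /d /redcost /=; have [-> ->] := potT g gT; rewrite mulr0 mul0r subr0.
have deb : d eb = 0 by rewrite /d /redcost /= mulfK // subrr.
have zeb : zb e = 0 by rewrite zb0.
have the : th e = sg by rewrite /th ze1 zeb mulr0 subr0 mulr1.
have thLU : forall f, (f \in L) || (f \in U) -> f != e -> th f = 0.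
  move=> f fLU fe; have [fT fb] : f \notin T /\ f != eb.
    case/orP: fLU => fI; split; try by apply: contraTneq fI => ->.
    - by rewrite (disjointFr dLT fI).
    - by rewrite (disjointFl dTU fI).
  by rewrite /th ze0 // zb0 // mulr0 subrr mulr0.
have cth : conservation N th.
  apply: (@cons_ext (fun f => sg * ze f + (- (sg * r)) * zb f)); last exact: cons_comb.
  by move=> g; rewrite /th; ring.
have uth : usage N th = 0.
  rewrite (@usage_ext th (fun f => sg * ze f + (- (sg * r)) * zb f)); last by move=> g; rewrite /th; ring.
  rewrite usage_comb (usage_cyc N ze) (usage_cyc N zb) (Dfee _ _ zec) (Dfee _ _ zbc) /r.
  by rewrite mulNr -mulrA divfK // subrr.
have dl0 : 0 <= dl.
  rewrite /dl /delta_f; case: ifP => thn; first by apply: neg_div => //; case/andP: (fx e').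
  have thp : 0 < th e' by rewrite lt_def th0' leNgt thn.
  by apply: divr_ge0; [rewrite subr_ge0; case/andP: (fx e') | exact: ltW].
set x' := fun f => x f + dl * th f.
have x'e' : x' e' = (if th e' < 0 then 0 else (cap N e')%:R).
  rewrite /x' /dl /delta_f; case: ifP => _; rewrite divfK //; ring.
have x'f : forall f, 0 <= x' f <= (cap N f)%:R.
  move=> f; case: (eqVneq (th f) 0) => [tf0|tfn].
    by rewrite /x' tf0 mulr0 addr0.
  have := thmin f tfn; rewrite -/dl /delta_f.
  have [xf0 xfc] := andP (fx f).
  case: ifP => tf; move=> H.
  - have H1 : dl * th f >= - x f / th f * th f by apply: ler_wnM2r => //; exact: ltW.
    rewrite divfK // in H1.
    have H2 : dl * th f <= 0 by apply: mulr_ge0_le0 => //; exact: ltW.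
    apply/andP; split; rewrite /x'; lra.
  - have thp : 0 < th f by rewrite lt_def tfn leNgt tf.
    have H1 : dl * th f <= ((cap N f)%:R - x f) / th f * th f by apply: ler_wpM2r => //; exact: ltW.
    rewrite divfK // in H1.
    have H2 : 0 <= dl * th f by apply: mulr_ge0 => //; exact: ltW.
    apply/andP; split; rewrite /x'; lra.
have cx' : conservation N x'.
  apply: (@cons_ext (fun f => 1 * x f + dl * th f)); first by move=> g; rewrite mul1r.
  by apply: cons_comb => //; case: bx.
have [_ xL xU ux] := bx.
have ux' : usage N x' = (bud N)%:R + 2%:R^-1.
  rewrite (@usage_ext x' (fun f => 1 * x f + dl * th f)); last by move=> g; rewrite mul1r.
  by rewrite usage_comb uth mulr0 addr0 mul1r ux.
have x'L : forall f, f \in L :\ e -> x' f = 0.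
  move=> f; rewrite !inE => /andP[fe fL]; rewrite /x' thLU ?fL // mulr0 addr0; exact: xL.
have x'U : forall f, f \in U :\ e -> x' f = (cap N f)%:R.
  move=> f; rewrite !inE => /andP[fe fU]; rewrite /x' thLU ?fU ?orbT // mulr0 addr0; exact: xU.
have x'e'c : x' e' != 0 -> x' e' = (cap N e')%:R.
  by rewrite x'e'; case: ifP => // _; rewrite eqxx.
have x'e'0 : th e' < 0 -> x' e' = 0 by rewrite x'e' => ->.
have x'e'u : 0 < th e' -> x' e' = (cap N e')%:R by move=> h; rewrite x'e' ltNge (ltW h).
have bx' : basic_sol N S' x'.
  have mk : forall (L' T' U' : {set E}) eb', (forall f, f \in L' -> x' f = 0) ->
      (forall f, f \in U' -> x' f = (cap N f)%:R) -> basic_sol N (BS L' T' U' eb') x'.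
    by move=> ? ? ? ? h1 h2; split.
  have y0 : forall A : {set E}, (forall f, f \in A -> x' f = 0) -> x' e' == 0 ->
      forall f, f \in e' |: A -> x' f = 0.
    by move=> A hA /eqP h f; rewrite !inE => /orP[/eqP->|] //; exact: hA.
  have yu : forall A : {set E}, (forall f, f \in A -> x' f = (cap N f)%:R) -> x' e' != 0 ->
      forall f, f \in e' |: A -> x' f = (cap N f)%:R.
    by move=> A hA h f; rewrite !inE => /orP[/eqP->|]; [exact: x'e'c | exact: hA].
  move: nt; case: (eqVneq e' e) => [ee|ene].
    have the' : th e' = sg by rewrite ee.
    case: ifP => eL ->; apply: mk.
    - exact: x'L.
    - move=> f; rewrite !inE => /orP[/eqP->|fU].
        by rewrite -ee; apply: x'e'u; rewrite the' /sg eL ltr01.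
      apply: x'U; rewrite !inE fU andbT; apply: contraTneq fU => ->.
      by rewrite (disjointFr dLU eL).
    - move=> f; rewrite !inE => /orP[/eqP->|fL].
        by rewrite -ee; apply: x'e'0; rewrite the' /sg eL ltrN10.
      by apply: x'L; rewrite !inE fL andbT; apply: contraTneq fL => ->; rewrite eL.
    - exact: x'U.
  case: (eqVneq e' eb) => [eeb|eneb].
    rewrite -eeb => ->; rewrite -/(x' e').
    by case: eqP => h; apply: mk; [exact: (y0 _ x'L (introT eqP h)) | exact: x'U | exact: x'L | exact: (yu _ x'U (introN eqP h))].
  case=> -[_ ->]; rewrite -/(x' e').
    by case: eqP => h; apply: mk; [exact: (y0 _ x'L (introT eqP h)) | exact: x'U | exact: x'L | exact: (yu _ x'U (introN eqP h))].
  by case: eqP => h; apply: mk; [exact: (y0 _ x'L (introT eqP h)) | exact: x'U | exact: x'L | exact: (yu _ x'U (introN eqP h))].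
have sthd : \sum_g th g * d g = sg * d e.
  rewrite (bigD1 e) //= the big1 ?addr0 // => g ge.
  have [[-> _]|[gL _]|[gT _]|[gU _]] := part g hB.
  - by rewrite deb mulr0.
  - by rewrite thLU ?gL // mul0r.
  - by rewrite dT // mulr0.
  - by rewrite thLU ?gU ?orbT // mul0r.
have dsplit : forall w : E -> R, conservation N w -> usage N w = 0 ->
    \sum_g w g * (cst N g)%:~R = \sum_g w g * d g.
  move=> w cw uw; rewrite -(sum_cpi pi cw).
  have -> : \sum_g w g * d g = \sum_g w g * cpi N pi g -
      cpi N pi eb / bmu N mu eb * \sum_g w g * bmu N mu g.
    rewrite mulr_sumr -sumrB; apply: eq_bigr => g _; rewrite /d /redcost /=; ring.
  by rewrite (sum_bmu mu cw) -usage_cyc uw mulr0 subr0.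
have sgd : sg * d e = - `|d e|.
  case: ent => -[eI dI].
    by rewrite /sg eI mul1r ltr0_norm // opprK.
  by rewrite /sg (disjointFl dLU eI) mulN1r gtr0_norm.
set Del := dl * `|d e|.
have Del0 : 0 <= Del by apply: mulr_ge0.
have cost' : cost N x' = cost N x0 - Del.
  rewrite cost_lin (dsplit _ cth uth) sthd sgd mulrN.
  by congr (_ - _); apply: eq_bigr => g _; rewrite xx0.
exists x', Del; split => //; split; last first.
  rewrite ndE -leNgt => dl0'; rewrite /Del.
  have dz : dl = 0 by apply/eqP; rewrite eq_le dl0' dl0.
  by rewrite dz mul0r.
rewrite ndE => dlp.
set n := #|V|; set m := #|E|; set Bm := Bmax N; set Um := Umax N.
have n0 : (0 < n)%N by apply/card_gt0P; exists (src N e).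
have cT : #|T| = n.-1 by case/andP: sT => _ /eqP.
have cA : forall f, f \notin T -> #|f |: T| = n.
  by move=> f fT; rewrite cardsU1 fT cT add1n prednK.
have feeB : forall g, `|(fee N g)%:R : R| <= Bm%:R.
  move=> g; rewrite ger0_norm // ler_nat /Bm /Bmax; exact: (@leq_bigmax E (fun g => fee N g) g).
have capU : forall g, (cap N g)%:R <= Um%:R :> R.
  by move=> g; rewrite ler_nat /Um /Umax; exact: (@leq_bigmax E (fun g => cap N g) g).
have zeU := cyc_U sT eT zec.
have zbU : forall g, isU (zb g) by apply: (cyc_U sT ebT); exact: zbc.
have Dle : `|bmu N mu eb| <= n%:R * Bm%:R.
  rewrite -(Dfee _ _ zbc) -(cA _ ebT); apply: sum_bound => //.
  - by move=> g; rewrite !inE negb_or => /andP[g1 g2]; apply: zb0.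
  - by move=> g; apply: isU_le1.
have Ele : `|bmu N mu e| <= n%:R * Bm%:R.
  rewrite -(Dfee _ _ zec) -(cA _ eT); apply: sum_bound => //.
  - by move=> g; rewrite !inE negb_or => /andP[g1 g2]; apply: ze0.
  - by move=> g; apply: isU_le1.
have DZ : isZ (bmu N mu eb).
  rewrite -(Dfee _ _ zbc); apply: isZ_sum => g _; apply: isZM; [exact: isU_Z|exact: isZ_nat].
have EZ : isZ (bmu N mu e).
  rewrite -(Dfee _ _ zec); apply: isZ_sum => g _; apply: isZM; [exact: isU_Z|exact: isZ_nat].
have CZ : forall (z : E -> R) (f : E), is_cycvec N T f z -> (forall g, isU (z g)) -> isZ (cpi N pi f).
  move=> z f zc zU'; rewrite -(Dcst _ _ zc); apply: isZ_sum => g _.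
  apply: isZM; [exact: isU_Z|exact: isZ_int].
have de1 : 1 <= n%:R * Bm%:R * `|d e|.
  have dne : d e != 0 by case: ent => -[_ h]; [rewrite lt_eqF | rewrite gt_eqF].
  have eq1 : bmu N mu eb * d e = bmu N mu eb * cpi N pi e - cpi N pi eb * bmu N mu e.
    by rewrite /d /redcost /=; field.
  have : 1 <= `|bmu N mu eb * d e|.
    apply: isZ_ge1; last by rewrite mulf_neq0.
    rewrite eq1; apply: isZB; apply: isZM => //; [exact: (CZ _ _ zec zeU) | exact: (CZ _ _ zbc zbU)].
  rewrite normrM => h; apply: le_trans h _; apply: ler_wpM2r => //.
have dl1 : 1 <= 4%:R * n%:R * Bm%:R * dl.
  set s := if th e' < 0 then x e' else (cap N e')%:R - x e'.
  have dls : dl = s / `|th e'|.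
    rewrite /dl /delta_f /s; case: ifP => tn.
      by rewrite ltr0_norm // invrN mulrN mulNr.
    by rewrite gtr0_norm // lt_def th0' leNgt tn.
  have gr := basic_gran hB zbc bx; rewrite (Dfee _ _ zbc) in gr.
  have sZ : isZ (2%:R * bmu N mu eb * s).
    rewrite /s; case: ifP => _ //; rewrite mulrBr; apply: isZB => //.
    apply: isZM; [apply: isZM; [exact: isZ_nat|exact: DZ]|exact: isZ_nat].
  have tZ : th e' * bmu N mu eb = sg * (ze e' * bmu N mu eb - bmu N mu e * zb e').
    by rewrite /th /r; field.
  have tle : `|th e' * bmu N mu eb| <= 2%:R * (n%:R * Bm%:R).
    rewrite tZ normrM.
    have -> : `|sg| = 1 by rewrite /sg; case: ifP; rewrite ?normrN normr1.
    rewrite mul1r; apply: le_trans (ler_normB _ _) _; rewrite !normrM.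
    have := isU_le1 (zeU e'); have := isU_le1 (zbU e'); have := normr_ge0 (ze e').
    have := normr_ge0 (zb e'); have := normr_ge0 (bmu N mu eb); have := normr_ge0 (bmu N mu e).
    move: Dle Ele; set nB := n%:R * Bm%:R; nra.
  have tpos : 0 < `|th e'| by rewrite normr_gt0.
  have spos : 0 < s by move: dlp; rewrite dls pmulr_lgt0 // invr_gt0.
  have : 1 <= `|2%:R * bmu N mu eb * s|.
    by apply: isZ_ge1 => //; rewrite !mulf_neq0 ?pnatr_eq0 // gt_eqF.
  have -> : `|2%:R * bmu N mu eb * s| = 2%:R * dl * `|th e' * bmu N mu eb|.
    rewrite dls !normrM (ger0_norm (ltW spos)) normr_nat; field.
    by move: th0'; rewrite /th mulf_eq0 negb_or => /andP[h1 h2]; rewrite !normr_eq0 h1 h2.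
  move=> h; apply: le_trans h _.
  rewrite [X in _ <= X](_ : _ = 2%:R * dl * (2%:R * (n%:R * Bm%:R))); last by rewrite -!natrM; ring.
  apply: ler_wpM2l => //; apply: mulr_ge0 => //.
split.
- move=> y [cy fy] uy.
  set w := fun g => 1 * y g + (-1) * x g.
  have cw : conservation N w by apply: cons_comb => //; case: bx.
  have uw : usage N w = 0 by rewrite usage_comb uy ux; ring.
  have gapw : cost N y - cost N x = \sum_g w g * (cst N g)%:~R.
    rewrite /cost -sumrB; apply: eq_bigr => g _; rewrite /w; ring.
  rewrite (dsplit _ cw uw) in gapw.
  have lb : forall g, - (Um%:R * `|d e|) <= w g * d g.
    move=> g; have dneg : 0 <= Um%:R * `|d e| by apply: mulr_ge0.
    have [cg0 cgU] : 0 <= (cap N g)%:R :> R /\ (cap N g)%:R <= Um%:R :> R by split => //.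
    have [[-> _]|[gL _]|[gT _]|[gU _]] := part g hB.
    - by rewrite [d eb]deb mulr0 oppr_le0.
    - rewrite /w xL // mulr0 addr0 mul1r.
      have [y0 yc] := andP (fy g).
      case: (leP 0 (d g)) => dg; first by apply: le_trans (mulr_ge0 y0 dg); rewrite oppr_le0.
      have : `|d g| <= `|d e| by apply: dmax; left.
      rewrite ltr0_norm // => h; nra.
    - by rewrite (dT g) // mulr0 oppr_le0.
    - rewrite /w xU // mulN1r mul1r.
      have [y0 yc] := andP (fy g).
      case: (leP (d g) 0) => dg; first by apply: le_trans (_ : 0 <= _); [rewrite oppr_le0 | nra].
      have : `|d g| <= `|d e| by apply: dmax; right.
      rewrite gtr0_norm // => h; nra.
  have : - (m%:R * (Um%:R * `|d e|)) <= \sum_g w g * d g.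
    have : \sum_(g : E) (- (Um%:R * `|d e|)) <= \sum_g w g * d g.
      by apply: ler_sum => g _; exact: lb.
    rewrite sumr_const [m%:R * _]mulr_natl mulNrn; exact: id.
  rewrite -gapw => h1.
  have cxx : cost N x = cost N x0 by apply: eq_bigr => g _; rewrite xx0.
  rewrite -cxx.
  have h2 : cost N x - cost N y <= m%:R * Um%:R * `|d e| by lra.
  apply: le_trans h2 _; rewrite /Del !natrM.
  have h0 : 0 <= m%:R * Um%:R * `|d e| :> R by rewrite !mulr_ge0.
  rewrite [X in _ <= X](_ : _ = (m%:R * Um%:R * `|d e|) * (4%:R * n%:R * Bm%:R * dl)); last ring.
  by rewrite -[X in X <= _]mulr1; apply: ler_wpM2l.
- rewrite /Del !natrM.
  rewrite [X in _ <= X](_ : _ = (4%:R * n%:R * Bm%:R * dl) * (n%:R * Bm%:R * `|d e|)); last ring.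
  by have := ler_pM ler01 ler01 dl1 de1; rewrite mulr1.
- have : (#|[set e; eb]| <= m)%N by apply: max_card.
  by rewrite cards2 ebe.
Qed.

End Step2.


Section Run.
Variables (R : realFieldType) (V E : finType) (N : net V E) (vr : V).

Definition BF (S : bstruct E) (x : E -> R) :=
  basic_sol N S x /\ (forall f, 0 <= x f <= (cap N f)%:R).

Lemma uniqG S (x y : E -> R) : is_basis N R S -> basic_sol N S x -> basic_sol N S y -> x =1 y.
Proof. case: S => L T U eb; exact: basic_unique. Qed.

Lemma stepG S S' b (x0 : E -> R) :
  dantzig_pivot N R vr S S' b -> is_basis N R S' -> BF S x0 ->
  exists x' : E -> R, exists Del : R,
   [/\ BF S' x', cost N x' = cost N x0 - Del, 0 <= Del &
       (b -> [/\ (forall y : E -> R, feasible_flow N y -> usage N y = (bud N)%:R + 2%:R^-1 ->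
                     cost N x0 - cost N y <= (4 * #|V| * #|E| * Umax N * Bmax N)%:R * Del),
                 1 <= (4 * #|V| ^ 2 * Bmax N ^ 2)%:R * Del & (2 <= #|E|)%N])
       /\ (~~ b -> Del = 0)].
Proof.
case: S => L T U eb piv hB' [bx fx].
have [x' [Del [bx' fx' c' D0 H]]] := step piv hB' bx fx.
by exists x', Del; split.
Qed.

Lemma cost_ext (x y : E -> R) : x =1 y -> cost N x = cost N y.
Proof. by move=> xy; apply: eq_bigr => g _; rewrite xy. Qed.

Lemma cost_bound (x : E -> R) : (forall f, 0 <= x f <= (cap N f)%:R) ->
  `|cost N x| <= (#|E| * Cmax N * Umax N)%:R.
Proof.
move=> fx; apply: le_trans (ler_norm_sum _ _ _) _.
apply: le_trans (_ : _ <= \sum_(g : E) ((Cmax N)%:R * (Umax N)%:R : R)) _; last first.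
  rewrite sumr_const -[(_ * _) *+ _]mulr_natl !natrM mulrA; exact: lexx.
apply: ler_sum => g _; rewrite normrM; have [x0 xc] := andP (fx g).
apply: ler_pM => //.
  rewrite -intr_norm -abszE pmulrn ler_nat /Cmax.
  exact: (@leq_bigmax E (fun g => absz (cst N g)) g).
rewrite ger0_norm //; apply: le_trans xc _; rewrite ler_nat /Umax.
exact: (@leq_bigmax E (fun g => cap N g) g).
Qed.

Lemma bern (q : R) (M : nat) : 0 <= q -> 1 + M%:R * q <= (1 + q) ^+ M.
Proof.
move=> q0; elim: M => [|M IH]; first by rewrite mul0r addr0 expr0.
rewrite exprSr; apply: le_trans (_ : (1 + M%:R * q) * (1 + q) <= _); last first.
  by apply: ler_wpM2r => //; rewrite addr_ge0.
rewrite -natr1; have : 0 <= M%:R * q * q by rewrite !mulr_ge0.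
nra.
Qed.

Lemma half_pow (M : nat) : (0 < M)%N -> 2%:R * (1 - M%:R^-1) ^+ M <= 1 :> R.
Proof.
move=> M0; set q := M%:R^-1 : R.
have q0 : 0 <= q by rewrite invr_ge0.
have q1 : q <= 1 by rewrite invf_le1 // ?ler1n // ltr0n.
have Mq : M%:R * q = 1 by rewrite mulfV // pnatr_eq0 -lt0n.
have h1 : 2%:R <= (1 + q) ^+ M by have := bern M q0; rewrite Mq.
have h2 : (1 - q) ^+ M * (1 + q) ^+ M <= 1.
  rewrite -exprMn; apply: exprn_ile1; nra.
have h3 : 0 <= (1 - q) ^+ M by apply: exprn_ge0; lra.
apply: le_trans h2; rewrite mulrC; exact: ler_wpM2l.
Qed.

Lemma nb (n m C U B : nat) : (2 <= m)%N -> (n <= m + 1)%N -> (0 < C)%N -> (0 < U)%N -> (0 < B)%N ->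
  ((4 * n ^ 2 * B ^ 2) * (2 * (m * C * U)) < 2 ^ (10 * up_log 2 (m * C * U * B)))%N.
Proof.
move=> m2 nm C0 U0 B0.
set P := (m * C * U * B)%N.
have Pa := @up_logP 2 P isT.
move: Pa; set u := up_log 2 P => Pa.
set a := (2 ^ u)%N in Pa *.
have mP : (m <= P)%N by rewrite /P -!mulnA leq_pmulr // !muln_gt0 C0 U0 B0.
have BP : (B <= P)%N by rewrite /P leq_pmull // !muln_gt0 C0 U0; lia.
have a2 : (2 <= a)%N by lia.
have -> : (2 ^ (10 * u) = a ^ 10)%N by rewrite mulnC expnM.
have L1 : (4 * n ^ 2 * B ^ 2 * (2 * (m * C * U)) = 8 * n * n * P * B)%N.
  by rewrite /P; lia.
rewrite L1.
have L2 : (8 * n * n * P * B <= 8 * (2 * a) * (2 * a) * a * a)%N.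
  have n2 : (n <= 2 * a)%N by lia.
  repeat apply: leq_mul => //; lia.
apply: leq_ltn_trans L2 _.
have a5 : (32 <= a ^ 5)%N.
  have h : (2 ^ 5 <= a ^ 5)%N by rewrite leq_exp2r.
  exact: h.
have : (32 * a ^ 4 < a ^ 10)%N.
  have -> : (a ^ 10 = a ^ 5 * a ^ 4 * a)%N by rewrite -expnD -expnSr.
  apply: (leq_ltn_trans (leq_mul a5 (leqnn (a ^ 4)))).
  rewrite -[X in (X < _)%N]muln1 ltn_pmul2l ?muln_gt0 ?expn_gt0; lia.
apply: leq_ltn_trans; rewrite !expnS expn0; lia.
Qed.

Section Run2.
Variables (k : nat) (Ss : nat -> bstruct E) (nd : nat -> bool).
Hypothesis run : dantzig_run N R vr k Ss nd.

Definition Nsum j := (\sum_(i < j) nd i)%N.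

Lemma isb j : (j <= k)%N -> is_basis N R (Ss j).
Proof.
case: run => _ piv [tb _]; rewrite leq_eqVlt => /orP[/eqP->//|jk].
by case: (piv j jk).
Qed.

Lemma exBF j : (j <= k)%N -> exists x, BF (Ss j) x.
Proof.
elim: j => [_|j IH jk].
  by case: run => -[_ [x [bx fx]]] _ _; exists x.
have [x0 bx0] := IH (ltnW jk).
case: run => _ piv _.
have [x' [Del [bx' _ _ _]]] := stepG (piv j jk) (isb jk) bx0.
by exists x'.
Qed.

Lemma NsumS j : Nsum j.+1 = (Nsum j + nd j)%N.
Proof. by rewrite /Nsum big_ord_recr. Qed.

Lemma rho_bounds (M : nat) : 0 <= 1 - M%:R^-1 :> R /\ 1 - M%:R^-1 <= 1 :> R.
Proof.
have i0 : 0 <= M%:R^-1 :> R by rewrite invr_ge0.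
split; last by lra.
case: (posnP M) => [->|Mp]; first by rewrite invr0 subr0.
rewrite subr_ge0 invf_le1 ?ler1n ?ltr0n //.
Qed.

Lemma A (y : E -> R) : BF (Ss k) y -> forall j, (j <= k)%N -> forall x, BF (Ss j) x ->
  cost N x - cost N y <= (1 - (4 * #|V| * #|E| * Umax N * Bmax N)%:R^-1) ^+ Nsum j
                           * (2 * (#|E| * Cmax N * Umax N))%:R.
Proof.
move=> hy; set M := (4 * _ * _ * _ * _)%N; set rho := 1 - M%:R^-1.
have [rho0 rho1] := rho_bounds M.
have [[cy _ _ uy] fy] := hy.
elim=> [_ x [_ fx] | j IH jk x [bx fx]].
  rewrite /Nsum big_ord0 expr0 mul1r.
  have h1 := cost_bound fx; have h2 := cost_bound fy.
  have := ler_norm (cost N x); have := ler_norm (- cost N y); rewrite normrN natrM.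
  move: h1 h2; set P := (#|E| * Cmax N * Umax N)%:R; lra.
have [xj bxj] := exBF (ltnW jk). have IHj := IH (ltnW jk) xj bxj.
case: run => _ piv _.
have [x' [Del [bx' c' D0 [Hnd Hnd0]]]] := stepG (piv j jk) (isb jk) bxj.
have xx := uniqG (isb jk) bx bx'.1. rewrite (cost_ext xx) c' NsumS.
case: (nd j) Hnd Hnd0 => [Hnd _|_ Hnd0]; last by rewrite Hnd0 // subr0 addn0.
have [gap _ _] := Hnd isT.
have g := gap y (conj cy fy) uy.
rewrite addn1 exprS -mulrA.
apply: le_trans (_ : _ <= rho * (cost N xj - cost N y)) _; last by apply: ler_wpM2l.
have h : M%:R^-1 * (cost N xj - cost N y) <= Del.
  case: (posnP M) => [M0|Mp].
    have M0R : M%:R = 0 :> R by rewrite M0.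
    by rewrite M0R invr0 mul0r.
  by rewrite mulrC ler_pdivrMr ?ltr0n // mulrC.
rewrite /rho mulrBl mul1r; move: h; set t := M%:R^-1 * _; lra.
Qed.

Lemma Bl (y : E -> R) : BF (Ss k) y -> forall d j, (j + d = k)%N -> forall x, BF (Ss j) x ->
  (Nsum k)%:R <= (Nsum j)%:R + (4 * #|V| ^ 2 * Bmax N ^ 2)%:R * (cost N x - cost N y) :> R.
Proof.
move=> hy; elim=> [|d IH] j jd x bx.
  rewrite addn0 in jd; subst j.
  have xy := uniqG (isb (leqnn k)) bx.1 hy.1.
  by rewrite (cost_ext xy) subrr mulr0 addr0.
have jk : (j < k)%N by lia.
case: run => _ piv _.
have [x' [Del [bx' c' D0 [Hnd Hnd0]]]] := stepG (piv j jk) (isb jk) bx.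
have jd' : (j.+1 + d = k)%N by lia.
have := IH j.+1 jd' x' bx'; rewrite NsumS c' natrD.
have -> : cost N x - Del - cost N y = (cost N x - cost N y) - Del by ring.
rewrite mulrBr; set Q := (4 * _ * _)%:R; set A := Q * _; set B := Q * Del.
case: (nd j) Hnd Hnd0 => [Hnd _|_ Hnd0].
  have [_ h _] := Hnd isT; rewrite -/B in h; simpl; lra.
by rewrite /B Hnd0 // mulr0 /=; lra.
Qed.

End Run2.

Lemma ivt (nd : nat -> bool) kk t : (t <= Nsum nd kk)%N -> exists2 j, (j <= kk)%N & Nsum nd j = t.
Proof.
elim: kk t => [|kk IH] t.
  by rewrite /Nsum big_ord0 leqn0 => /eqP ->; exists 0%N => //; rewrite /Nsum big_ord0.
rewrite NsumS => ht.
case: (leqP t (Nsum nd kk)) => h.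
  by have [j jk Nj] := IH t h; exists j => //; apply: leqW.
exists kk.+1 => //; rewrite NsumS; move: ht h; case: (nd kk) => /=; lia.
Qed.

Section Run3.
Variables (k : nat) (Ss : nat -> bstruct E) (nd : nat -> bool).
Hypothesis run : dantzig_run N R vr k Ss nd.

Lemma run_bound : (Nsum nd k <= 40 * (#|V| * #|E| * Umax N * Bmax N *
                     up_log 2 (#|E| * Cmax N * Umax N * Bmax N)))%N.
Proof.
set Nt := Nsum nd k.
have [y hy] := exBF run (leqnn k).
case: (posnP Nt) => [-> //|Ntp].
have [i ik ndi] : exists2 i, (i < k)%N & nd i.
  case: (boolP [exists i : 'I_k, nd i]) => [/existsP[[i ik] /= ndi]|/existsPn H].
    by exists i.
  by move: Ntp; rewrite /Nt /Nsum big1 // => i _; rewrite (negbTE (H i)).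
have m2 : (2 <= #|E|)%N.
  have [xi bxi] := exBF run (ltnW ik).
  case: (run) => _ piv _.
  have [x' [Del [_ _ _ [Hnd _]]]] := stepG (piv i ik) (isb run ik) bxi.
  by have [_ _ ->] := Hnd ndi.
have [j jk Nj] := ivt (leq_pred Nt).
have [xj bxj] := exBF run jk.
have hA := A run hy jk bxj.
have hB := Bl run hy (subnKC jk) bxj.
rewrite Nj -/Nt in hA hB.
set Q := (4 * #|V| ^ 2 * Bmax N ^ 2)%N in hB.
set G := (2 * (#|E| * Cmax N * Umax N))%N in hA.
set M := (4 * #|V| * #|E| * Umax N * Bmax N)%N in hA.
set rho := 1 - M%:R^-1 in hA.
set p := rho ^+ Nt.-1 in hA.
have one : 1 <= p * (Q * G)%:R.
  have e1 : Nt%:R = Nt.-1%:R + 1 :> R by rewrite natr1 prednK.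
  rewrite e1 in hB.
  have Q0 : 0 <= Q%:R :> R by [].
  have := ler_wpM2l Q0 hA.
  have -> : p * (Q * G)%:R = Q%:R * (p * G%:R) by rewrite natrM; ring.
  move: hB; set g := Q%:R * (_ - _); set h := Q%:R * _; lra.
rewrite leqNgt; apply/negP => big.
have QG0 : (0 < Q * G)%N.
  rewrite lt0n; apply/negP => /eqP QG0; move: one; rewrite QG0 mulr0.
  by rewrite ler10.
move: (QG0); rewrite /Q /G !muln_gt0 /= => /and3P[/and3P[/andP[n0 _] B0 _] /andP[m0 C0] U0].
have nl : (#|V| <= #|E| + 1)%N.
  have := isb run (leq0n k); case: (Ss 0) => L T U eb [_ _ _ /andP[_ /eqP cT] _].
  have := max_card T; rewrite cT => h.
  have := leqSpred #|V|; lia.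
have nbd := nb m2 nl C0 U0 B0.
rewrite -/Q -/G in nbd.
set u := up_log 2 _ in big nbd.
set L := (10 * u)%N in nbd.
have MLle : (M * L <= Nt.-1)%N by rewrite /M /L; lia.
have [r0 r1] := rho_bounds M.
have Mp : (0 < M)%N by rewrite /M !muln_gt0 n0 m0 U0 B0.
have p1 : p <= rho ^+ (M * L) by apply: ler_wiXn2l.
have hp := half_pow Mp; rewrite -/rho in hp.
have p2 : rho ^+ M <= 2%:R^-1.
  by rewrite -div1r ler_pdivlMr ?ltr0n // mulrC.
have p3 : rho ^+ (M * L) <= (2%:R^-1) ^+ L.
  rewrite exprM; apply: lerXn2r => //; rewrite ?nnegrE ?exprn_ge0 ?invr_ge0 //.
have : 1 <= (2%:R ^+ L)^-1 * (Q * G)%:R :> R.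
  apply: le_trans one _; apply: ler_wpM2r => //.
  by rewrite -exprVn; apply: le_trans p1 p3.
rewrite mulrC ler_pdivlMr ?exprn_gt0 ?ltr0n // mul1r -natrX ler_nat => h.
by have := leq_ltn_trans h nbd; rewrite ltnn.
Qed.

End Run3.
End Run.


Local Close Scope ring_scope.

Theorem lemma6 : exists K : nat,
  forall (R : realFieldType) (V E : finType) (N : net V E),
  strongly_connected N ->
  (exists x : E -> R, [/\ feasible_flow N x,
       (forall y : E -> R, feasible_flow N y -> (cost N x <= cost N y)%R) &
       ((bud N)%:R + 1 <= usage N x)%R]) ->
  forall (vr : V) (k : nat) (Ss : nat -> bstruct E) (nd : nat -> bool),
  dantzig_run N R vr k Ss nd ->
  (\sum_(i < k) nd i <=
     K * (n_of V * m_of E * Umax N * Bmax N * up_log 2 (m_of E * Cmax N * Umax N * Bmax N)))%N.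
Proof.
exists 40 => R V E N _ _ vr k Ss nd run.
exact: (run_bound run).
Qed.
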